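(* Let $\sigma=\{\sigma_i\mid i\in I\}$ be a partition of the set of all primes, let $G$ be a finite group and let $N$ be a normal subgroup of $G$. If $\mathcal{H}=\{H_1,\ldots,H_t\}$ is a generalized Wielandt $\sigma$-set of $G$, then $\mathcal{H}_0=\{H_1N/N,\ldots,H_tN/N\}$ is a generalized Wielandt $\sigma$-set of $G/N$.
   Context: All groups are finite. $\sigma=\{\sigma_i\mid i\in I\}$ is a partition of the set $\mathbb{P}$ of primes. For $n\in\mathbb{N}$, $\sigma(n)=\{\sigma_i\mid \sigma_i\cap\pi(n)\ne\emptyset\}$ with $\pi(n)$ the primes dividing $n$; $\sigma(G)=\sigma(|G|)$, $\pi(G)=\pi(|G|)$. A group is $\sigma$-primary if $|\sigma(G)|\le1$ and $\sigma$-nilpotent if it is a direct product of $\sigma$-primary groups. A Hall $\sigma_i$-subgroup of $G$ is a subgroup whose order has all prime divisors in $\sigma_i$ and whose index has none in $\sigma_i$. A complete Hall $\sigma$-set of $G$ is a set $\mathcal{H}$ of subgroups such that every nontrivial member is a Hall $\sigma_i$-subgroup of $G$ for some $i$ and $\mathcal{H}$ contains exactly one Hall $\sigma_i$-subgroup of $G$ for each $\sigma_i\in\sigma(G)$. $G^{\mathfrak{N}_\sigma}$ is the intersection of all normal subgroups $M$ of $G$ with $G/M$ $\sigma$-nilpotent. For a set of primes $\pi$, a group is $\pi$-supersoluble if each of its chief factors is either cyclic of prime order in $\pi$ or a $\pi'$-group. A complete Hall $\sigma$-set $\mathcal{H}$ of $G$ is a generalized Wielandt $\sigma$-set of $G$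 if every member of $\mathcal{H}$ is $\pi(G^{\mathfrak{N}_\sigma})$-supersoluble. *)

(* Defs.v *)
From mathcomp Require Import all_boot all_fingroup all_solvable.
Set Implicit Arguments. Unset Strict Implicit. Unset Printing Implicit Defensive.
Local Open Scope group_scope.

(* A partition sigma = {sigma_i | i in I} of the primes is encoded by a map
   s : nat -> I assigning to each prime p the index i of the block sigma_i
   containing it; sigma_i = [pred p | s p == i] (restricted to primes). *)

Section SigmaDefs.
Variables (I : eqType) (s : nat -> I).

Definition sigma_i (i : I) : nat_pred := [pred p | s p == i].

Definition in_sigma_of (n : nat) (i : I) : bool := has (fun p => s p == i) (primes n).

Definition sigma_primary (gT : finGroupType) (G : {set gT}) : bool :=
  all (fun p => all (fun q => s p == s q) (primes #|G|)) (primes #|G|).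

Definition sigma_nilpotent (gT : finGroupType) (G : {set gT}) : bool :=
  [exists P : {set {group gT}},
     ((\big[dprod/1]_(H in P) (H : {set gT})) == G) &&
     [forall H in P, sigma_primary H]].

Definition sigma_residual (gT : finGroupType) (G : {set gT}) : {set gT} :=
  \bigcap_(M : {group gT} | (M <| G) && sigma_nilpotent (G / M)) M.

Definition sigma_Hall (gT : finGroupType) (i : I) (G H : {set gT}) : bool := (sigma_i i).-Hall(G) H.

Definition complete_Hall_sigma_set (gT : finGroupType) (G : {set gT}) (HH : {set {group gT}}) : Prop :=
  (forall H : {group gT}, H \in HH -> H :!=: 1 -> exists i, sigma_Hall i G H) /\
  (forall i, in_sigma_of #|G| i ->
     exists! H : {group gT}, H \in HH /\ sigma_Hall i G H).

End SigmaDefs.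

Definition pi_supersoluble (pi : nat_pred) (gT : finGroupType) (G : {set gT}) : Prop :=
  forall U V : {group gT}, chief_factor G V U ->
    (cyclic (U / V) && prime #|U / V| && (#|U / V| \in pi)) || pi^'.-group (U / V).

Definition gen_Wielandt_sigma_set (I : eqType) (s : nat -> I) (gT : finGroupType)
    (G : {set gT}) (HH : {set {group gT}}) : Prop :=
  complete_Hall_sigma_set s G HH /\
  (forall H : {group gT}, H \in HH -> pi_supersoluble \pi(sigma_residual s G) H).

(* Main.v *)
Require Import Defs.
From mathcomp Require Import all_boot all_fingroup all_solvable.
Set Implicit Arguments. Unset Strict Implicit. Unset Printing Implicit Defensive.
Local Open Scope group_scope.

Section S.
Variables (I : eqType) (s : nat -> I).
Local Notation sg i := (sigma_i s i).

Definition NH (gT : finGroupType) (pi : nat_pred) (X : {set gT}) : Prop :=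
  exists2 A : {group gT}, pi.-Hall(X) A & A <| X.

Definition SN (gT : finGroupType) (X : {set gT}) : Prop :=
  forall i, NH (sg i) X /\ NH (sg i)^' X.

Lemma prim_nat (gT : finGroupType) (H : {group gT}) i :
  sigma_primary s H -> ~~ (sg i).-group H -> (sg i)^'.-group H.
Proof.
move=> prH npi; rewrite /pgroup /pnat cardG_gt0 /=; apply/allP => p pP.
rewrite !inE /=; apply/negP => /eqP spi; case/negP: npi.
rewrite /pgroup /pnat cardG_gt0 /=; apply/allP => q qP; rewrite inE /= -spi.
by move/allP: prH => /(_ _ qP) /allP /(_ _ pP); rewrite eq_sym.
Qed.

Lemma bigpnat (gT : finGroupType) (P : pred {group gT}) pi (A : {group gT}) :
  \big[dprod/1]_(H | P H) gval H = A -> (forall H, P H -> pi.-group H) -> pi.-group A.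
Proof.
move=> dA hP; rewrite /pgroup -(bigdprod_card dA).
apply: (big_ind (fun n => pi.-nat n)) => //.
by move=> m n pm pn; rewrite pnatM pm pn.
Qed.

Lemma SN_of_sn (gT : finGroupType) (X : {group gT}) : sigma_nilpotent s X -> SN X.
Proof.
case/existsP => P /andP[/eqP dX /forallP prP] i.
have := dX; rewrite (bigID (fun H : {group gT} => (sg i).-group H)) /= => dX2.
have [[A B dA dB] _ _ _] := dprodP dX2.
have [nA nB] := dprod_normal2 dX2.
have cAB := dprod_card dX2.
rewrite dA dB in cAB nA nB.
have pA : (sg i).-group A.
  apply: bigpnat dA _ => H /andP[]; done.
have pB : (sg i)^'.-group B.
  apply: bigpnat dB _ => H /andP[HP nH].
  by apply: prim_nat nH; move: (prP H); rewrite HP.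
have sAX := normal_sub nA; have sBX := normal_sub nB.
split.
  exists A => //; rewrite /pHall sAX pA /=.
  have := Lagrange sAX; rewrite -cAB => /eqP; rewrite eqn_pmul2l ?cardG_gt0 // => /eqP ->.
  done.
exists B => //; rewrite /pHall sBX pB /=.
have := Lagrange sBX; rewrite -cAB (mulnC #|A|) => /eqP; rewrite eqn_pmul2l ?cardG_gt0 // => /eqP ->.
by rewrite pnatNK.
Qed.

Lemma NH_normal (gT : finGroupType) pi (X B : {group gT}) : NH pi X -> B <| X -> NH pi B.
Proof.
case=> K hK nK nB; exists (K :&: B)%G; first exact: Hall_setI_normal nB hK.
exact: normalS (subsetIr _ _) (normal_sub nB) (normalI nK nB).
Qed.

Lemma pgroup_primary (gT : finGroupType) (A : {group gT}) i :
  (sg i).-group A -> sigma_primary s A.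
Proof.
move=> pA; apply/allP => p pP; apply/allP => q qP.
have := pnatPpi pA pP; have := pnatPpi pA qP; rewrite !inE /= => /eqP -> /eqP -> //.
Qed.

Lemma sn_of_SN (gT : finGroupType) (X : {group gT}) : SN X -> sigma_nilpotent s X.
Proof.
have [n leXn] := ubnP #|X|; elim: n X leXn => // n IH X leXn SNX.
have [X1 | ntX] := eqVneq X 1%G.
  apply/existsP; exists set0; rewrite big_set0 X1 eqxx /=.
  by apply/forallP => H; rewrite in_set0.
set p := pdiv #|X|.
have pX : p \in \pi(#|X|) by rewrite pi_pdiv cardG_gt1.
have [[A hA nA] [B hB nB]] := SNX (s p).
have pA := pHall_pgroup hA; have pB := pHall_pgroup hB.
have sAX := normal_sub nA; have sBX := normal_sub nB.
have tiAB : A :&: B = 1 := coprime_TIg (pnat_coprime pA pB).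
have cAB : B \subset 'C(A).
  apply/commG1P; apply/trivgP; rewrite -tiAB setIC; apply: commg_subI.
    by rewrite subsetI subxx (subset_trans sBX (normal_norm nA)).
  by rewrite subsetI subxx (subset_trans sAX (normal_norm nB)).
have defX : A \x B = X.
  rewrite dprodE //; apply/eqP; rewrite eqEcard mul_subG //= TI_cardMg //.
  by rewrite (card_Hall hA) (card_Hall hB) partnC.
have ntA : A :!=: 1.
  apply/eqP => A1; case/and3P: hA => _ _; rewrite A1 indexg1 => /pnatPpi /(_ pX).
  by rewrite !inE /= eqxx.
have ltB : #|B| < n.
  have ltBX : #|B| < #|X| by rewrite -(dprod_card defX) ltn_Pmull // cardG_gt1.
  by apply: leq_trans ltBX _; rewrite -ltnS.
have SNB : SN B by move=> j; have [h1 h2] := SNX j; split; apply: NH_normal nB.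
have [PB /andP[/eqP dB /forallP prB]] := existsP (IH B ltB SNB).
have subB : forall H : {group gT}, H \in PB -> H \subset B.
  move=> H HP; rewrite -(bigdprodWY dB); apply: sub_gen.
  by apply: (bigcup_sup H).
have AnP : A \notin PB.
  apply/negP => AP; have sAB := subB A AP; case/negP: ntA; apply/eqP; apply/trivgP.
  by rewrite -tiAB subsetI subxx.
apply/existsP; exists (A |: PB); rewrite big_setU1 //= dB defX eqxx /=.
apply/forallP => H; apply/implyP; case/setU1P => [-> | HP].
  exact: pgroup_primary pA.
by have := prB H; rewrite HP.
Qed.

Definition CI (gT : finGroupType) (pi : nat_pred) (G M : {set gT}) : Prop :=
  exists K : {group gT}, [/\ M \subset K, K <| G, pi.-nat #|K : M| & pi^'.-nat #|G : K|].

Lemma idx_dvd (gT : finGroupType) (X Y Z : {group gT}) :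
  X \subset Y -> Y \subset 'N(Z) -> #|X : Z| %| #|Y : Z|.
Proof.
move=> sXY nZY; rewrite -!card_quotient ?(subset_trans sXY) //.
exact: cardSg (quotientS _ sXY).
Qed.

Lemma CI_of_NH (gT : finGroupType) pi (G M : {group gT}) :
  M <| G -> NH pi (G / M) -> CI pi G M.
Proof.
move=> nsMG [A hA nA]; have [sMG nMG] := andP nsMG.
have sAG := pHall_sub hA.
have sGD : G / M \subset coset M @* 'N(M) by rewrite morphimS.
have sAD := subset_trans sAG sGD.
exists (coset M @*^-1 A)%G; split.
- by rewrite -{1}(ker_coset M) ker_sub_pre.
- by rewrite -(quotientGK nsMG) morphpre_normal.
- rewrite -card_quotient ?subsetIl //= cosetpreK.
  exact: pHall_pgroup hA.
- rewrite -{1}(quotientGK nsMG) index_morphpre //.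
  by case/and3P: hA.
Qed.

Lemma CI_morphim (gT rT : finGroupType) (D : {group gT}) (f : {morphism D >-> rT})
   pi (G M : {group gT}) :
  G \subset D -> CI pi G M -> CI pi (f @* G) (f @* M).
Proof.
move=> sGD [K [sMK nKG pKM pGK]].
have sKD := subset_trans (normal_sub nKG) sGD.
exists (f @* K)%G; split.
- exact: morphimS.
- exact: morphim_normal.
- apply: pnat_dvd pKM; apply: index_morphim; exact: subset_trans (subsetIl _ _) sKD.
- exact: morphim_p_index.
Qed.

Lemma NH_of_CI (gT rT : finGroupType) (D : {group gT}) (f : {morphism D >-> rT})
   pi (G M : {group gT}) :
  G \subset D -> M \subset 'ker f -> CI pi G M -> NH pi (f @* G).
Proof.
move=> sGD sMk [K [sMK nKG pKM pGK]].
have sKD := subset_trans (normal_sub nKG) sGD.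
exists (f @* K)%G; last exact: morphim_normal.
rewrite /pHall morphimS ?normal_sub //= morphim_p_index // andbT.
rewrite /pgroup card_morphim (setIidPr sKD).
apply: pnat_dvd pKM; exact: indexgS.
Qed.

Lemma CI_G (gT : finGroupType) pi (G : {group gT}) : CI pi G G.
Proof. by exists G; rewrite indexgg normal_refl subxx. Qed.

Lemma CI_I (gT : finGroupType) pi (G M1 M2 : {group gT}) :
  M1 <| G -> M2 <| G -> CI pi G M1 -> CI pi G M2 -> CI pi G (M1 :&: M2).
Proof.
move=> nM1 nM2 [K1 [sMK1 nK1 pK1 pG1]] [K2 [sMK2 nK2 pK2 pG2]].
have [sK1G nK1G] := andP nK1; have [sK2G nK2G] := andP nK2.
have [sM1G nM1G] := andP nM1; have [sM2G nM2G] := andP nM2.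
exists (K1 :&: K2)%G; split.
- exact: setISS.
- exact: normalI.
- set L := (K1 :&: K2)%G.
  have sJL : M1 :&: M2 \subset L :&: M1.
    by rewrite subsetI subsetIl andbT setISS.
  rewrite /= -(Lagrange_index (subsetIl L M1) sJL) pnatM; apply/andP; split.
    rewrite indexgI; apply: pnat_dvd pK1; apply: idx_dvd (subsetIl _ _) _.
    exact: subset_trans sK1G nM1G.
  have -> : (M1 :&: M2)%G = ((L :&: M1) :&: M2)%G.
    apply/group_inj/eqP; rewrite eqEsubset subsetI sJL subsetIr /=.
    by rewrite setSI // subsetIr.
  rewrite indexgI; apply: pnat_dvd pK2; apply: idx_dvd _ (subset_trans sK2G nM2G).
  by rewrite /= subIset // subsetIr.
- rewrite /= -(Lagrange_index sK1G (subsetIl K1 K2)) pnatM pG1 /=.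
  rewrite indexgI; apply: pnat_dvd pG2; apply: idx_dvd sK1G nK2G.
Qed.

Lemma sn1 (gT : finGroupType) : sigma_nilpotent s [1 gT].
Proof.
apply/existsP; exists set0; rewrite big_set0 eqxx /=.
by apply/forallP => H; rewrite in_set0.
Qed.

Lemma resid_C (gT : finGroupType) (G : {group gT}) :
  exists R : {group gT}, [/\ sigma_residual s G = R, R <| G &
     forall i, CI (sg i) G R /\ CI (sg i)^' G R].
Proof.
pose P (X : {set gT}) := exists Y : {group gT}, [/\ G :&: X = Y, Y <| G &
     forall i, CI (sg i) G Y /\ CI (sg i)^' G Y].
have : P (sigma_residual s G).
  rewrite /sigma_residual; apply: big_ind.
  - by exists G; rewrite setIT normal_refl; split=> // i; split; apply: CI_G.
  - move=> X1 X2 [Y1 [e1 n1 c1]] [Y2 [e2 n2 c2]]; exists (Y1 :&: Y2)%G; split.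
    + by rewrite setIIr e1 e2.
    + exact: normalI.
    + move=> i; have [a1 b1] := c1 i; have [a2 b2] := c2 i.
      by split; apply: CI_I.
  - move=> M /andP[nM snM]; exists M; split.
    + exact: (setIidPr (normal_sub nM)).
    + done.
    + move=> i; have [h1 h2] := SN_of_sn snM i.
      by split; apply: CI_of_NH.
case=> Y [eY nY cY]; exists Y; split=> //.
rewrite -eY; apply/esym/setIidPr.
apply: (bigcap_inf G); rewrite normal_refl /= trivg_quotient; exact: sn1.
Qed.

Lemma resid_gset (gT : finGroupType) (X : {set gT}) : group_set (sigma_residual s X).
Proof. exact: group_set_bigcap. Qed.

Lemma resid_quo (gT : finGroupType) (G N : {group gT}) : N <| G ->
  {subset \pi(sigma_residual s (G / N)) <= \pi(sigma_residual s G)}.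
Proof.
move=> nNG; have [R [-> nRG cR]] := resid_C G.
have nG := normal_norm nNG.
have sub : sigma_residual s (G / N) \subset R / N.
  apply: (bigcap_inf (R / N)%G); rewrite quotient_normal //=.
  apply: sn_of_SN => i; have [h1 h2] := cR i.
  have nRNG : G / N \subset 'N(R / N) by apply: normal_norm; apply: quotient_normal.
  split; apply: (NH_of_CI nRNG); rewrite ?ker_coset //; apply: CI_morphim => //.
pose Rq := Group (resid_gset (G / N)).
have: #|Rq| %| #|R| by apply: dvdn_trans (cardSg sub) (dvdn_morphim _ _).
by move/pi_of_dvd; apply.
Qed.

Lemma maxnormal_pre (gT rT : finGroupType) (D : {group gT}) (f : {morphism D >-> rT})
   (U V : {group rT}) :
  U \subset f @* D -> V \subset f @* D -> maxnormal V U (f @* D) ->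
  maxnormal (f @*^-1 V) (f @*^-1 U) D.
Proof.
move=> sUD sVD /maxgroupP[/andP[pVU nV] maxV].
have kD : 'ker f \subset D by apply/subsetP => x /dom_ker.
have eD : f @*^-1 (f @* D) = D := morphimGK kD (subxx _).
apply/maxgroupP; split.
  rewrite morphpre_proper //= pVU /=.
  apply: subset_trans (_ : D \subset f @*^-1 (f @* D)) _; first by rewrite eD.
  exact: morphpre_norms.
move=> K /andP[pKU nKD] sVK.
have sKD : K \subset D.
  apply: subset_trans (proper_sub pKU) _; exact: subsetIl.
have kK : 'ker f \subset K := subset_trans (ker_sub_pre f V) sVK.
have eK : f @*^-1 (f @* K) = K := morphimGK kK sKD.
have fKD : f @* K \subset f @* D := morphimS f sKD.
have -> : gval K = f @*^-1 (f @* K) by rewrite eK.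
congr (f @*^-1 _); apply: (maxV (f @* K)%G).
  rewrite /= -(morphpre_proper fKD sUD) eK pKU /=.
  exact: morphim_norms.
by rewrite -(morphpreK sVD) morphimS.
Qed.

Lemma supersol_quo (gT : finGroupType) (pi rho : nat_pred) (H N : {group gT}) :
  H \subset 'N(N) -> {subset rho <= pi} ->
  pi_supersoluble pi H -> pi_supersoluble rho (H / N).
Proof.
move=> nNH srp sH U V /andP[mV nUH].
pose f := restrm nNH (coset N).
have imf : f @* H = H / N by rewrite morphim_restrm setIid.
rewrite -imf in mV nUH.
have sUD : U \subset f @* H := normal_sub nUH.
have sVU := maxnormal_sub mV.
have sVD := subset_trans sVU sUD.
have kD : 'ker f \subset H by apply/subsetP => x /dom_ker.
have eD : f @*^-1 (f @* H) = H := morphimGK kD (subxx _).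
have ch : chief_factor H (f @*^-1 V) (f @*^-1 U).
  have h : f @*^-1 U <| f @*^-1 (f @* H) by rewrite morphpre_normal.
  rewrite eD in h; by rewrite /chief_factor maxnormal_pre.
have nVU : U \subset 'N(V).
  apply: subset_trans sUD _; by case/maxgroupp/andP: mV.
have nVU' : f @*^-1 U \subset 'N(f @*^-1 V).
  exact: morphpre_norms nVU.
have eq : #|f @*^-1 U / f @*^-1 V| = #|U / V|.
  by rewrite !card_quotient // index_morphpre.
have := sH _ _ ch; rewrite /pgroup eq.
case/orP => [/andP[/andP[_ pr] inpi] | p'].
  case: (boolP (#|U / V| \in rho)) => r.
    by rewrite pr prime_cyclic.
  by apply/orP; right; rewrite /pgroup pnatE // inE /= r.
apply/orP; right; rewrite /pgroup; apply: sub_in_pnat p' => q _.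
rewrite !inE /=; apply: contra (srp q).
Qed.
End S.

Unset Implicit Arguments.
Set Strict Implicit.

Theorem lemma3p2 (I : eqType) (s : nat -> I) (gT : finGroupType)
    (G N : {group gT}) (HH : {set {group gT}}) :
  N <| G ->
  gen_Wielandt_sigma_set s G HH ->
  gen_Wielandt_sigma_set s (G / N) [set ((H <*> N) / N)%G | H : {group gT} in HH].
Proof.
move=> nNG [[hH1 hH2] hS].
have nG := normal_norm nNG.
have sHG : forall H : {group gT}, H \in HH -> H \subset G.
  move=> H HH0; have [-> | ntH] := eqVneq H 1%G; first exact: sub1G.
  by have [i /pHall_sub] := hH1 H HH0 ntH.
have nHN : forall H : {group gT}, H \in HH -> H \subset 'N(N).
  by move=> H /sHG sH; apply: subset_trans sH nG.
have eq : forall H : {group gT}, H \in HH -> (H <*> N) / N = H / N.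
  by move=> H /nHN; apply: quotientYidr.
split; [split|].
- move=> K /imsetP[H HH0 ->] ntK.
  have ntH : H :!=: 1.
    apply: contraNneq ntK => H1; by rewrite /= eq // H1 quotient1.
  have [i hi] := hH1 H HH0 ntH; exists i.
  rewrite /sigma_Hall /= eq //; apply: morphim_pHall => //; exact: nHN.
- move=> i /hasP[p pP /eqP spi].
  have pG : p \in primes #|G|.
    have := pi_of_dvd (dvdn_morphim (coset N) G) (cardG_gt0 G); apply; exact: pP.
  have [H [[HH0 hi] uH]] : exists! H : {group gT}, H \in HH /\ sigma_Hall s i G H.
    by apply: hH2; apply/hasP; exists p => //; rewrite spi.
  exists ((H <*> N) / N)%G; split.
    split; first by apply/imsetP; exists H.
    rewrite /sigma_Hall /= eq //; apply: morphim_pHall => //; exact: nHN.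
  move=> K' [/imsetP[H' HH0' ->] hK'].
  suff -> : H' = H by [].
  apply: esym; apply: uH; split => //.
  rewrite /sigma_Hall /= eq // in hK'.
  have ntK' : H' / N != 1.
    apply/eqP => K1; case/and3P: hK' => _ _; rewrite K1 indexg1 => /pnatPpi /(_ pP).
    by rewrite !inE /= spi eqxx.
  have ntH' : H' :!=: 1.
    apply: contraNneq ntK' => H1; by rewrite H1 quotient1.
  have [j hj] := hH1 H' HH0' ntH'.
  have hj' : (sigma_i s j).-Hall(G / N) (H' / N) by apply: morphim_pHall => //; exact: nHN.
  have qin : pdiv #|H' / N| \in \pi(#|H' / N|) by rewrite pi_pdiv cardG_gt1.
  have := pnatPpi (pHall_pgroup hK') qin; have := pnatPpi (pHall_pgroup hj') qin.
  rewrite !inE /= => /eqP -> /eqP ji.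
  by rewrite /sigma_Hall -ji.
- move=> K /imsetP[H HH0 ->]; rewrite /= eq //.
  apply: supersol_quo (nHN H HH0) (resid_quo nNG) (hS H HH0).
Qed.
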